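(* Let $q\ge2$, $n\ge1$, $X=\{0,\ldots,q-1\}$, and let $\mathcal{L}=\{L_1,\ldots,L_k\}$ be a partition of $X^n$ with respect to which the Insect Markov chain on $X^n$ is lumpable. Then there exists a subgroup $K\le Aut(T_{q,n})$ such that the orbits of $K$ on $X^n$ are exactly the parts $L_1,\ldots,L_k$.
   Context: $X^n$ is identified with the set of leaves (boundary) of the rooted $q$-ary tree $T_{q,n}$ of depth $n$, whose vertices are the words of length $\le n$ over $X$. $Aut(T_{q,n})$ (the iterated wreath product $Sym(q)\wr\cdots\wr Sym(q)$, $n$ factors) is the group of permutations $g$ of $X^n$ such that for all $x,y\in X^n$ and $m\le n$, $x_1\cdots x_m=y_1\cdots y_m$ iff $(gx)_1\cdots(gx)_m=(gy)_1\cdots(gy)_m$. For $x,y\in X^n$, $d(x,y)=n-\max\{m: x_1\cdots x_m=y_1\cdots y_m\}$. Set $\alpha_j=\frac{q^j-1}{q^{j+1}-1}$ for $1\le j\le n-1$, $\alpha_n=0$. The Insect Markov chain on $X^n$ has transition probabilities $p(x,y)=q^{-1}(1-\alpha_1)+\sum_{i=2}^nq^{-i}\alpha_1\cdots\alpha_{i-1}(1-\alpha_i)$ if $d(x,y)\in\{0,1\}$ and $p(x,y)=\sum_{i=j}^nq^{-i}\alpha_1\cdots\alpha_{i-1}(1-\alpha_i)$ if $d(x,y)=j>1$. A chain is lumpable with respect to a partition if for all parts $L,L'$ the map $x\mapsto\sum_{y\in L'}p(x,y)$ is constant on $L$. *)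

(* Defs.v *)
From HB Require Import structures.
From mathcomp Require Import all_boot all_order all_algebra all_fingroup.
Set Implicit Arguments. Unset Strict Implicit. Unset Printing Implicit Defensive.
Import Order.TTheory GRing.Theory Num.Theory.

Notation word q n := (n.-tuple 'I_q).

Definition tree_aut (q n : nat) : {set {perm word q n}} :=
  [set g : {perm word q n} | [forall x : word q n, forall y : word q n,
     forall m : 'I_n.+1,
       (take m x == take m y) == (take m (g x) == take m (g y))]].

Definition tdist (q n : nat) (x y : word q n) : nat :=
  n - \max_(m < n.+1 | take m x == take m y) m.

Section Insect.
Variables (R : realFieldType) (q n : nat).
Local Open Scope ring_scope.

Definition ialpha (j : nat) : R :=
  if (j < n)%N then ((q%:R ^+ j - 1) / (q%:R ^+ j.+1 - 1)) else 0.

Definition iterm (i : nat) : R :=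
  (q%:R ^+ i)^-1 * (\prod_(1 <= k < i) ialpha k) * (1 - ialpha i).

Definition insect_p (x y : word q n) : R :=
  let d := tdist x y in
  if (d <= 1)%N then
    (q%:R)^-1 * (1 - ialpha 1) + \sum_(2 <= i < n.+1) iterm i
  else \sum_(d <= i < n.+1) iterm i.

Definition lumpable (P : {set {set word q n}}) : Prop :=
  forall L L' : {set word q n}, L \in P -> L' \in P ->
  forall x y : word q n, x \in L -> y \in L ->
    \sum_(z in L') insect_p x z = \sum_(z in L') insect_p y z.
End Insect.

(* Main.v *)
Require Import Defs.
From HB Require Import structures.
From mathcomp Require Import all_boot all_order all_algebra all_fingroup.
From mathcomp Require Import zify ring lra.
Import Order.TTheory GRing.Theory Num.Theory.
Set Implicit Arguments. Unset Strict Implicit. Unset Printing Implicit Defensive.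

Section Comb.
Variable q : nat.

Lemma tree_autP n (g : {perm word q n}) :
  g \in tree_aut q n <-> forall (x y : word q n) m, m <= n ->
    (take m x == take m y) = (take m (g x) == take m (g y)).
Proof.
rewrite inE; split.
- move/forallP=> H x y m hm.
  by move/forallP: (H x) => /(_ y)/forallP/(_ (Ordinal (hm : m < n.+1)))/eqP.
- move=> H; apply/forallP=> x; apply/forallP=> y; apply/forallP=> m.
  by apply/eqP; apply: H; rewrite -ltnS.
Qed.

Definition cnt n (Lab : finType) (l : word q n -> Lab) (x : word q n) k lab :=
  #|[set z : word q n | (l z == lab) && (take k z == take k x)]|.
Definition Hc n (Lab : finType) (l1 l2 : word q n -> Lab) :=
  forall x y, l1 x = l2 y -> forall k lab, cnt l1 x k lab = cnt l2 y k lab.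
Definition sublab n (Lab : finType) (l : word q n.+1 -> Lab) (c : 'I_q) : word q n -> Lab :=
  fun w => l [tuple of c :: w].
Definition LS n (Lab : finType) (l : word q n.+1 -> Lab) c : {set Lab} :=
  [set sublab l c w | w in [set: word q n]].

Lemma beheadT n (a : 'I_q) (w : word q n) : behead_tuple [tuple of a :: w] = w.
Proof. exact: val_inj. Qed.

Lemma cons_inj n (a : 'I_q) : injective (fun w : word q n => [tuple of a :: w]).
Proof. by move=> w1 w2 /(congr1 val) [] /val_inj. Qed.

Lemma cnt_sub n (Lab : finType) (l : word q n.+1 -> Lab) (c : 'I_q) (x' : word q n) k lab :
  cnt l [tuple of c :: x'] k.+1 lab = cnt (sublab l c) x' k lab.
Proof.
rewrite /cnt -(card_imset _ (@cons_inj n c)); apply: eq_card => z.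
case/tupleP: z => a w; rewrite inE /=.
case: (eqVneq a c) => [->|ne].
  by rewrite mem_imset; [rewrite inE eqseq_cons eqxx | exact: cons_inj].
rewrite eqseq_cons (negbTE ne) andbF; apply/esym/negbTE/imsetP => [[v _]].
by move/(congr1 val) => [] /eqP; rewrite (negbTE ne).
Qed.

Lemma H_sub n (Lab : finType) (l l' : word q n.+1 -> Lab) c c' :
  Hc l l' -> Hc (sublab l c) (sublab l' c').
Proof. by move=> H x' y' e k lab; rewrite -!cnt_sub; apply: H. Qed.

Definition Pn (Lab : finType) n := forall l1 l2 : word q n -> Lab,
  Hc l1 l1 -> Hc l1 l2 -> Hc l2 l1 -> Hc l2 l2 -> forall x y, l1 x = l2 y ->
  exists g : {perm word q n}, [/\ g \in tree_aut q n, forall z, l2 (g z) = l1 z & g x = y].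

Lemma LS_eq (Lab : finType) n (IH : Pn Lab n) (l l' : word q n.+1 -> Lab) :
  Hc l l -> Hc l l' -> Hc l' l -> Hc l' l' -> forall c c' w w',
  sublab l c w = sublab l' c' w' -> LS l c = LS l' c'.
Proof.
move=> H1 H2 H3 H4 c c' w w' e.
have [g [_ Hg _]] := IH _ _ (H_sub (c:=c) (c':=c) H1) (H_sub (c:=c) (c':=c') H2) (H_sub (c:=c') (c':=c) H3) (H_sub (c:=c') (c':=c') H4) _ _ e.
apply/setP => lab; apply/imsetP/imsetP => [[v _ ->]|[v _ ->]].
  by exists (g v); rewrite ?inE // Hg.
by exists (g^-1 v)%g; rewrite ?inE // -Hg permKV.
Qed.

Lemma claimA (Lab : finType) n (IH : Pn Lab n) (l l' : word q n.+1 -> Lab) :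
  Hc l l -> Hc l l' -> Hc l' l -> Hc l' l' -> forall c0 S, LS l' c0 = S ->
  [set z | l z \in S] = [set z | LS l (thead z) == S].
Proof.
move=> H1 H2 H3 H4 c0 S e; apply/setP => z; case/tupleP: z => a w.
rewrite !inE theadE; apply/idP/eqP.
  move=> hS; have: l [tuple of a :: w] \in LS l' c0 by rewrite e.
  by case/imsetP => w0 _ e0; rewrite -e; apply: (LS_eq IH H1 H2 H3 H4 e0).
by move=> <-; apply/imsetP; exists w; rewrite ?inE.
Qed.

Lemma card_head n (Pr : pred 'I_q) :
  #|[set z : word q n.+1 | Pr (thead z)]| = #|[set c | Pr c]| * #|[set: word q n]|.
Proof.
have inj : injective (fun p : 'I_q * word q n => [tuple of p.1 :: p.2]).
  by move=> [a w] [b v] /= /(congr1 val) [] -> /val_inj ->.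
rewrite -cardsX -(card_imset _ inj); apply: eq_card => z.
case/tupleP: z => a w; rewrite inE theadE; apply/idP/imsetP.
  by move=> Pa; exists (a, w); rewrite // !inE Pa.
by case=> [[b v]]; rewrite !inE /= => /andP[Pb _] /(congr1 val) [] ->.
Qed.

Lemma card_preim_sum n (Lab : finType) (l : word q n -> Lab) (S : {set Lab}) :
  #|[set z | l z \in S]| = \sum_(lab in S) #|[set z | l z == lab]|.
Proof.
rewrite -sum1_card (partition_big l (fun lab => lab \in S)) /=; last by move=> z; rewrite inE.
apply: eq_bigr => lab Hlab; rewrite -sum1_card; apply: eq_bigl => z; rewrite !inE.
by case: eqP => [->|]; rewrite ?Hlab ?andbF.
Qed.

Lemma cnt0 n (Lab : finType) (l : word q n -> Lab) x lab :
  cnt l x 0 lab = #|[set z | l z == lab]|.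
Proof. by apply: eq_card => z; rewrite !inE !take0 eqxx andbT. Qed.

Lemma perm_match (C : eqType) m (f g : 'I_m -> C) a b :
  (forall S, #|[set c | f c == S]| = #|[set c | g c == S]|) -> f a = g b ->
  exists s : {perm 'I_m}, (forall c, g (s c) = f c) /\ s a = b.
Proof.
move=> hc eab.
have cntE (h : 'I_m -> C) S : count_mem S [tuple h i | i < m] = #|[set c | h c == S]|.
  rewrite /= count_map enumT -size_filter cardE /enum_mem.
  by congr size; apply: eq_filter => c; rewrite !inE.
have pe : perm_eq [tuple f i | i < m] [tuple g i | i < m].
  by rewrite /perm_eq; apply/allP => S _ /=; rewrite !cntE hc.
case/tuple_permP: pe => p ep.
have fg i : f i = g (p i).
  have := congr1 (fun t => tnth t i) (val_inj ep : [tuple f i | i < m] = _).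
  by rewrite /= !tnth_mktuple.
exists (p * tperm (p a) b)%g; split; last by rewrite permM tpermL.
move=> c; rewrite permM; case: tpermP => [/perm_inj ->|e|_ _]; rewrite ?fg //.
  by rewrite -fg eab.
by rewrite -fg e eab.
Qed.


Lemma tree_iso (Lab : finType) n : Pn Lab n.
Proof.
elim: n => [|n IH] l1 l2 H11 H12 H21 H22 x y e.
  exists 1%g; split.
  - by apply/tree_autP => u v m _; rewrite !perm1.
  - by move=> z; rewrite perm1; move: e; rewrite (tuple0 z) (tuple0 x) (tuple0 y) => ->.
  - by rewrite perm1 (tuple0 x) (tuple0 y).
set a := thead x; set b := thead y.
have ex : sublab l1 a (behead_tuple x) = sublab l2 b (behead_tuple y).
  by rewrite /sublab -!tuple_eta.
have eab : LS l1 a = LS l2 b := LS_eq IH H11 H12 H21 H22 ex.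
have cntS S : #|[set c | LS l1 c == S]| = #|[set c | LS l2 c == S]|.
  case: (boolP ([exists c, LS l1 c == S] || [exists c, LS l2 c == S])) => [hex|hnex].
    have A1 : [set z | l1 z \in S] = [set z | LS l1 (thead z) == S].
      case/orP: hex => /existsP [c0 /eqP h0].
        exact: (claimA IH H11 H11 H11 H11 h0).
      exact: (claimA IH H11 H12 H21 H22 h0).
    have A2 : [set z | l2 z \in S] = [set z | LS l2 (thead z) == S].
      case/orP: hex => /existsP [c0 /eqP h0].
        exact: (claimA IH H22 H21 H12 H11 h0).
      exact: (claimA IH H22 H22 H22 H22 h0).
    have : #|[set z | l1 z \in S]| = #|[set z | l2 z \in S]|.
      rewrite !card_preim_sum; apply: eq_bigr => lab _.
      by rewrite -(@cnt0 _ _ l1 x lab) -(@cnt0 _ _ l2 y lab); apply: H12.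
    rewrite A1 A2 (@card_head n (fun c => LS l1 c == S)) (@card_head n (fun c => LS l2 c == S)).
    move/eqP; rewrite eqn_pmul2r; first by move/eqP.
    by apply/card_gt0P; exists (behead_tuple x); rewrite inE.
  rewrite negb_or in hnex; case/andP: hnex => /existsPn h1 /existsPn h2.
  have -> : [set c | LS l1 c == S] = set0 by apply/setP => c; rewrite !inE (negbTE (h1 c)).
  have -> : [set c | LS l2 c == S] = set0 by apply/setP => c; rewrite !inE (negbTE (h2 c)).
  by [].
have [s [hs hsa]] := perm_match cntS eab.
have hg : forall c, exists g : {perm word q n}, [/\ g \in tree_aut q n,
    forall w, sublab l2 (s c) (g w) = sublab l1 c w &
    (c == a) ==> (g (behead_tuple x) == behead_tuple y)].
  move=> c; case: (eqVneq c a) => [->|ne].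
    have ex' : sublab l1 a (behead_tuple x) = sublab l2 (s a) (behead_tuple y) by rewrite hsa.
    have [g [g1 g2 g3]] := IH _ _ (H_sub (c:=a) (c':=a) H11) (H_sub (c:=a) (c':=s a) H12)
      (H_sub (c:=s a) (c':=a) H21) (H_sub (c:=s a) (c':=s a) H22) _ _ ex'.
    by exists g; split; rewrite ?eqxx ?g3 ?eqxx.
  have : sublab l1 c (behead_tuple x) \in LS l2 (s c).
    by rewrite hs; apply/imsetP; exists (behead_tuple x); rewrite ?inE.
  case/imsetP => w' _ e'.
  have [g [g1 g2 g3]] := IH _ _ (H_sub (c:=c) (c':=c) H11) (H_sub (c:=c) (c':=s c) H12)
      (H_sub (c:=s c) (c':=c) H21) (H_sub (c:=s c) (c':=s c) H22) _ _ e'.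
  by exists g; split; rewrite ?(negbTE ne).
have [gs hgs] := fin_all_exists hg.
pose Gf (z : word q n.+1) : word q n.+1 := [tuple of s (thead z) :: gs (thead z) (behead_tuple z)].
have Ginj : injective Gf.
  move=> z1 z2; case/tupleP: z1 => a1 w1; case/tupleP: z2 => a2 w2.
  rewrite /Gf !theadE !beheadT => /(congr1 val) [] /perm_inj e1; subst a2.
  by move/val_inj/perm_inj ->.
exists (perm Ginj); split.
- apply/tree_autP => z1 z2 m hm; rewrite !permE /Gf.
  case/tupleP: z1 => a1 w1; case/tupleP: z2 => a2 w2; rewrite !theadE !beheadT.
  case: m hm => [|m] hm; first by rewrite !take0.
  rewrite /= !eqseq_cons (inj_eq perm_inj).
  case: (eqVneq a1 a2) => [<-|] //=.
  by have [/tree_autP g1 _ _] := hgs a1; apply: g1.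
- move=> z; rewrite permE /Gf; case/tupleP: z => a1 w1; rewrite !theadE !beheadT.
  by have [_ g2 _] := hgs a1; apply: g2.
- rewrite permE /Gf -/a hsa; have [_ _ /implyP h3] := hgs a.
  by rewrite (eqP (h3 (eqxx _))) -tuple_eta.
Qed.

End Comb.

Section SpecPart.

Local Open Scope ring_scope.

Lemma sep (R : fieldType) (T : finType) (rel : T -> T -> Prop) (K : T -> T -> R)
  (HK : forall g : T -> R, (forall x y, rel x y -> g x = g y) ->
     forall x y, rel x y -> \sum_z K x z * g z = \sum_z K y z * g z)
  (mu : nat -> R) (s : seq nat) (G : nat -> T -> R) :
  uniq s -> {in s &, injective mu} ->
  (forall a, a \in s -> forall x, \sum_z K x z * G a z = mu a * G a x) ->
  (forall x y, rel x y -> \sum_(a <- s) G a x = \sum_(a <- s) G a y) ->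
  forall a, a \in s -> forall x y, rel x y -> G a x = G a y.
Proof.
elim: s G => [|b s IH] G //= /andP[bs us] imu eig hsum.
pose G' a x := (mu a - mu b) * G a x.
have hG' : forall a, a \in s -> forall x y, rel x y -> G' a x = G' a y.
  apply: IH => //.
  - by move=> a1 a2 h1 h2; apply: imu; rewrite inE ?h1 ?h2 orbT.
  - move=> a ha x; rewrite /G'.
    under eq_bigr => z _ do rewrite mulrCA.
    by rewrite -mulr_sumr eig ?inE ?ha ?orbT // mulrCA.
  - have e : forall x, \sum_(a <- s) G' a x =
        \sum_z K x z * (\sum_(a <- b :: s) G a z) - mu b * \sum_(a <- b :: s) G a x.
      move=> x.
      have e1 : \sum_z K x z * (\sum_(a <- b :: s) G a z) = \sum_(a <- b :: s) mu a * G a x.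
        rewrite (eq_bigr (fun z => \sum_(a <- b :: s) K x z * G a z)); last by move=> z _; rewrite big_distrr.
        rewrite exchange_big /=; apply: eq_big_seq => a ha; exact: eig.
      rewrite e1 !big_cons mulrDr big_distrr /= opprD addrACA subrr add0r -sumrB.
      by apply: eq_bigr => a _; rewrite /G' mulrBl.
    move=> x y hxy; rewrite !e (HK _ _ _ _ hxy); last first.
      by move=> u v huv; apply: hsum.
    by rewrite (hsum _ _ hxy).
have hs : forall a, a \in s -> forall x y, rel x y -> G a x = G a y.
  move=> a ha x y hxy.
  have ne : mu a - mu b != 0.
    rewrite subr_eq0; apply/eqP => h; move: bs; rewrite -(imu a b) ?ha //.
      by rewrite inE ha orbT.
    by rewrite inE eqxx.
  have := hG' a ha x y hxy; rewrite /G' => /(congr1 (fun t => (mu a - mu b)^-1 * t)).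
  by rewrite !mulKf.
move=> a; rewrite inE => /orP[/eqP ->|ha]; last exact: hs.
move=> x y hxy.
have := hsum x y hxy; rewrite !big_cons (eq_big_seq (fun a => G a y) (r := s)); last first.
  by move=> c hc; apply: hs.
by move/addIr.
Qed.

Section Ops.
Variables (R : realFieldType) (q n : nat).

Definition cls k (x : word q n) := [set z : word q n | take k z == take k x].
Definition Nk k x := #|cls k x|.
Definition Eop k (g : word q n -> R) x := (Nk k x)%:R^-1 * \sum_(z in cls k x) g z.
Definition Dop a g x := Eop a g x - (if a is a'.+1 then Eop a' g x else 0).

Lemma cls_refl k x : x \in cls k x.
Proof. by rewrite inE. Qed.

Lemma cls_sym k x z : (z \in cls k x) = (x \in cls k z).
Proof. by rewrite !inE eq_sym. Qed.

Lemma cls_eq k x z : z \in cls k x -> cls k z = cls k x.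
Proof. by rewrite inE => /eqP e; apply/setP => w; rewrite !inE e. Qed.

Lemma cls_sub k1 k2 x z : (k1 <= k2)%N -> z \in cls k2 x -> z \in cls k1 x.
Proof. by move=> h; rewrite !inE => /eqP e; rewrite -(take_takel _ h) e take_takel. Qed.

Lemma Nk_gt0 k x : (0 < Nk k x)%N.
Proof. by apply/card_gt0P; exists x; exact: cls_refl. Qed.

Lemma Nk_neq0 k x : (Nk k x)%:R != 0 :> R.
Proof. by rewrite pnatr_eq0 -lt0n Nk_gt0. Qed.

Lemma Nk_le k x y : (k <= n)%N -> (Nk k x <= Nk k y)%N.
Proof.
move=> hk.
pose phi (z : word q n) : word q n := insubd y (take k y ++ drop k z).
have vphi z : val (phi z) = take k y ++ drop k z.
  by rewrite insubdK // unfold_in /= size_cat size_drop size_takel ?size_tuple // subnKC.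
rewrite /Nk -(card_in_imset (f := phi) (D := cls k x)); last first.
  move=> z1 z2; rewrite !inE => /eqP h1 /eqP h2 /(congr1 val); rewrite !vphi => /eqP.
  rewrite eqseq_cat // => /andP[_ /eqP hd]; apply: val_inj => /=.
  by rewrite -(cat_take_drop k z1) -(cat_take_drop k z2) h1 h2 hd.
apply: subset_leq_card; apply/subsetP => _ /imsetP[z hz ->].
by rewrite inE vphi take_size_cat // size_takel // size_tuple.
Qed.

Lemma Nk_const k x y : (k <= n)%N -> Nk k x = Nk k y.
Proof. by move=> hk; apply/eqP; rewrite eqn_leq !Nk_le. Qed.

Lemma Eop_cls k g x z : z \in cls k x -> Eop k g z = Eop k g x.
Proof. by move=> h; rewrite /Eop /Nk (cls_eq h). Qed.

Lemma Eop_const k c x : Eop k (fun _ => c) x = c.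
Proof. by rewrite /Eop sumr_const -[c *+ _]mulr_natr mulrCA -/(Nk k x) mulVf ?mulr1 ?Nk_neq0. Qed.

Lemma Eop_B k g h x : Eop k (fun z => g z - h z) x = Eop k g x - Eop k h x.
Proof. by rewrite /Eop sumrB mulrBr. Qed.

Lemma Eop_ext k g h x : (forall z, g z = h z) -> Eop k g x = Eop k h x.
Proof. by move=> e; rewrite /Eop; congr (_ * _); apply: eq_bigr. Qed.

Lemma Eop_n g x : Eop n g x = g x.
Proof.
have e : cls n x = [set x].
  apply/setP => z; rewrite !inE !take_oversize ?size_tuple //.
by rewrite /Eop /Nk e cards1 big_set1 invr1 mul1r.
Qed.

Lemma Eop_E a b g x : Eop a (Eop b g) x = Eop (minn a b) g x.
Proof.
case: (leqP a b) => hab.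
  rewrite /Eop; congr (_ * _).
  rewrite (eq_bigr (fun z => \sum_(w in cls b z) (Nk b z)%:R^-1 * g w)); last first.
    by move=> z _; rewrite big_distrr.
  rewrite (exchange_big_dep (fun w => w \in cls a x)) /=; last first.
    move=> z w hz hw; rewrite cls_sym in hw.
    by move: (cls_sub hab hw) hz; rewrite !inE => /eqP <-.
  apply: eq_bigr => w hw.
  rewrite (eq_bigl (fun z => z \in cls b w)); last first.
    move=> z; apply/andP/idP => [[_ h]|h]; first by rewrite cls_sym.
    split; last by rewrite cls_sym.
    by move: (cls_sub hab h) hw; rewrite !inE => /eqP ->.
  rewrite (eq_bigr (fun _ => (Nk b w)%:R^-1 * g w)); last first.
    by move=> z hz; rewrite /Nk (cls_eq hz).
  by rewrite sumr_const -[_ *+ _]mulr_natr -/(Nk b w) mulrAC mulVf ?mul1r ?Nk_neq0.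
rewrite [LHS]/Eop (eq_bigr (fun _ => Eop b g x)); last first.
  by move=> z hz; apply: Eop_cls; apply: cls_sub (ltnW hab) hz.
by rewrite sumr_const -[Eop b g x *+ _]mulr_natr -/(Nk a x) mulrCA mulVf ?mulr1 ?Nk_neq0.
Qed.


Lemma Eop_D k a g x : Eop k (Dop a g) x = if (a <= k)%N then Dop a g x else 0.
Proof.
case: a => [|a].
  have -> : Eop k (Dop 0 g) x = Eop k (Eop 0 g) x - Eop k (fun _ => 0) x by apply: Eop_B.
  by rewrite Eop_E Eop_const minn0 /Dop.
have -> : Eop k (Dop a.+1 g) x = Eop k (Eop a.+1 g) x - Eop k (Eop a g) x by apply: Eop_B.
rewrite !Eop_E /Dop; case: (boolP (a.+1 <= k)%N) => h.
  have -> : minn k a.+1 = a.+1 by lia.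
  by have -> : minn k a = a by lia.
have -> : minn k a.+1 = k by lia.
have -> : minn k a = k by lia.
by rewrite subrr.
Qed.

Lemma Dsum m g x : \sum_(0 <= a < m.+1) Dop a g x = Eop m g x.
Proof.
elim: m => [|m IH]; first by rewrite big_nat1 /Dop subr0.
by rewrite big_nat_recr //= IH /Dop addrC subrK.
Qed.

Lemma tdist_le (x z : word q n) i : (i <= n)%N ->
  (tdist x z <= i)%N = (take (n - i) z == take (n - i) x).
Proof.
move=> hi; rewrite /tdist; set M := \max_(m < n.+1 | _) _.
have hM : (M <= n)%N.
  by apply/bigmax_leqP => m _; rewrite -ltnS ltn_ord.
apply/idP/idP => h.
  have hQ : take M x == take M z.
    rewrite /M; apply: (big_ind (fun M => take M x == take M z)) => //.
      by rewrite !take0.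
    by move=> u v hu hv; have [->|->] : maxn u v = u \/ maxn u v = v by lia.
  have hle : (n - i <= M)%N by lia.
  by rewrite -(take_takel _ hle) -(eqP hQ) take_takel // eq_sym.
have hlt : (n - i < n.+1)%N by rewrite ltnS leq_subr.
have : (n - i <= M)%N.
  by apply: (leq_bigmax_cond (Ordinal hlt)); rewrite /= eq_sym.
lia.
Qed.

Lemma insectE (x z : word q n) : (1 <= n)%N -> insect_p R x z =
  \sum_(1 <= i < n.+1) (if take (n - i) z == take (n - i) x then iterm R q n i else 0).
Proof.
move=> hn.
rewrite [RHS](eq_big_nat _ _ (F2 := fun i => if (tdist x z <= i)%N then iterm R q n i else 0)); last first.
  by move=> i /andP[_ hi]; rewrite tdist_le.
have hd : (tdist x z <= n)%N by rewrite /tdist leq_subr.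
rewrite /insect_p /=; case: ifP => h1.
  rewrite [RHS]big_ltn // h1 (eq_big_nat _ _ (F2 := iterm R q n)); last first.
    by move=> i /andP[hi _]; rewrite ifT //; lia.
  by rewrite /iterm (big_geq (leqnn 1)) expr1 mulr1.
have h2 : (1 <= tdist x z)%N by lia.
have -> : \sum_(1 <= i < n.+1) (if (tdist x z <= i)%N then iterm R q n i else 0) =
   \sum_(1 <= i < tdist x z) (if (tdist x z <= i)%N then iterm R q n i else 0) +
   \sum_(tdist x z <= i < n.+1) (if (tdist x z <= i)%N then iterm R q n i else 0).
  by apply: big_cat_nat => //; lia.
rewrite [X in _ = X + _]big1_seq ?add0r; last first.
  by move=> i; rewrite mem_index_iota => /andP[_ hi]; rewrite ifF //; lia.
by apply: eq_big_nat => i /andP[hi _]; rewrite hi.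
Qed.

Lemma alpha_bd j : (2 <= q)%N -> (1 <= j < n)%N ->
  0 < ialpha R q n j /\ ialpha R q n j < 1.
Proof.
move=> hq /andP[j1 jn]; rewrite /ialpha jn.
have ha : 1 < (q%:R ^+ j : R).
  rewrite -natrX ltr1n; apply: (leq_trans hq); rewrite -{1}(expn1 q).
  by apply: leq_pexp2l => //; lia.
have hq' : 2 <= (q%:R : R) by rewrite ler_nat.
have hb : q%:R ^+ j.+1 = (q%:R ^+ j) * (q%:R : R) by rewrite exprSr.
rewrite hb; move: ha; move: (q%:R ^+ j) => a ha.
have hb0 : 0 < a * q%:R - 1 by nra.
split; first by apply: divr_gt0; lra.
by rewrite ltr_pdivrMr // mul1r; nra.
Qed.

Lemma iterm_gt0 i : (2 <= q)%N -> (1 <= i <= n)%N -> 0 < iterm R q n i.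
Proof.
move=> hq /andP[i1 iN]; rewrite /iterm.
apply: mulr_gt0; first apply: mulr_gt0.
- by rewrite invr_gt0 exprn_gt0 // ltr0n; lia.
- rewrite big_nat; apply: prodr_gt0 => k /andP[k1 ki].
  by case: (alpha_bd hq (_ : (1 <= k < n)%N)) => //; lia.
- rewrite subr_gt0; case: (ltnP i n) => h.
    by case: (alpha_bd hq (_ : (1 <= i < n)%N)) => //; lia.
  by rewrite /ialpha ltnNge h /= ltr01.
Qed.


Definition wt (x0 : word q n) i := iterm R q n i * (Nk (n - i) x0)%:R.
Definition mu x0 a := \sum_(1 <= i < n.+1) (if (a <= n - i)%N then wt x0 i else 0).

Lemma Pop (x0 x : word q n) h : (1 <= n)%N ->
  \sum_z insect_p R x z * h z = \sum_(1 <= i < n.+1) wt x0 i * Eop (n - i) h x.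
Proof.
move=> hn.
rewrite (eq_bigr (fun z : word q n => \sum_(1 <= i < n.+1)
   (if take (n - i) z == take (n - i) x then iterm R q n i * h z else 0))); last first.
  move=> z _; rewrite insectE // mulr_suml; apply: eq_bigr => i _.
  by case: ifP; rewrite ?mul0r.
rewrite exchange_big; apply: eq_big_nat => i /andP[_ hi].
rewrite -big_mkcond /= /wt /Eop (Nk_const x0 x (leq_subr i n)) mulrA mulfK ?Nk_neq0 //.
by rewrite big_distrr; apply: eq_bigl => z; rewrite inE.
Qed.

Lemma eigD x0 a g x : (1 <= n)%N ->
  \sum_z insect_p R x z * Dop a g z = mu x0 a * Dop a g x.
Proof.
move=> hn; rewrite (Pop x0) // /mu big_distrl /=; apply: eq_bigr => i _.
by rewrite Eop_D; case: ifP; rewrite ?mulr0 ?mul0r.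
Qed.

Lemma mu_lt x0 a b : (2 <= q)%N -> (a < b <= n)%N -> mu x0 b < mu x0 a.
Proof.
move=> hq /andP[ab bn].
have wpos i : (1 <= i <= n)%N -> 0 < wt x0 i.
  by move=> hi; apply: mulr_gt0; [exact: iterm_gt0 | rewrite ltr0n Nk_gt0].
have hw : wt x0 (n - a) = \sum_(1 <= i < n.+1) (if i == (n - a)%N then wt x0 i else 0).
  by rewrite -big_mkcond big_nat1_eq ifT //; lia.
have : mu x0 b + wt x0 (n - a) <= mu x0 a.
  rewrite hw /mu -big_split /=; apply: ler_sum_nat => i /andP[i1 iN].
  have wi : 0 < wt x0 i by apply: wpos; lia.
  case: eqP => [ei|ne].
    have -> : (b <= n - i)%N = false by lia.
    have -> : (a <= n - i)%N = true by lia.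
    by rewrite add0r.
  rewrite addr0; case: ifP => h; first by rewrite ifT //; lia.
  by case: ifP => _; rewrite ?lexx ?ltW.
have : 0 < wt x0 (n - a) by apply: wpos; lia.
lra.
Qed.

End Ops.

End SpecPart.
Local Open Scope ring_scope.

Lemma lumpC (R : realFieldType) q n (P : {set {set word q n}}) :
  (2 <= q)%N -> (1 <= n)%N -> partition P [set: word q n] -> lumpable R P ->
  Hc (fun z : word q n => pblock P z) (fun z : word q n => pblock P z).
Proof.
move=> hq hn hP hL x y exy k lab.
have red : forall z, cnt (fun z : word q n => pblock P z) z k lab =
                     cnt (fun z : word q n => pblock P z) z (minn k n) lab.
  move=> z; apply: eq_card => w; rewrite !inE.
  by rewrite !take_min !(@take_oversize _ n) ?size_tuple.
rewrite !red; set k' := minn k n; have hk : (k' <= n)%N by rewrite geq_minr.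
pose rel := fun u v : word q n => pblock P u = pblock P v.
pose f := fun z : word q n => if pblock P z == lab then 1%R else 0%R : R.
case/and3P: (hP) => /eqP hcov htriv _.
have HK : forall g : word q n -> R, (forall u v, rel u v -> g u = g v) ->
    forall u v, rel u v -> \sum_z insect_p R u z * g z = \sum_z insect_p R v z * g z.
  move=> g hg u v huv.
  have e w : \sum_z insect_p R w z * g z = \sum_(L in P) \sum_(z in L) insect_p R w z * g z.
    by rewrite -big_trivIset // hcov; apply: eq_bigl => z; rewrite inE.
  rewrite !e; apply: eq_bigr => L hLP.
  case: (set_0Vmem L) => [->|[w0 hw0]]; first by rewrite !big_set0.
  have gL z : z \in L -> g z = g w0.
    by move=> hz; apply: hg; rewrite /rel (def_pblock htriv hLP hz) (def_pblock htriv hLP hw0).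
  rewrite (eq_bigr (fun z => insect_p R u z * g w0)); last by move=> z hz; rewrite gL.
  rewrite [RHS](eq_bigr (fun z => insect_p R v z * g w0)); last by move=> z hz; rewrite gL.
  rewrite -!mulr_suml; congr (_ * _).
  apply: (hL (pblock P u) L) => //.
  - by apply: pblock_mem; rewrite hcov inE.
  - by rewrite mem_pblock hcov inE.
  - by rewrite /rel in huv; rewrite huv mem_pblock hcov inE.
have hD := sep HK (mu := mu R x) (s := index_iota 0 n.+1) (G := fun a => Dop a f).
have hD' : forall a, a \in index_iota 0 n.+1 -> forall u v, rel u v -> Dop a f u = Dop a f v.
  apply: hD.
  - exact: iota_uniq.
  - move=> a b; rewrite !mem_index_iota => ha hb e; apply/eqP; apply: contraT => ne.
    case: (ltngtP a b) => h.
    + by have := mu_lt R x hq (_ : (a < b <= n)%N); rewrite e ltxx; apply; lia.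
    + by have := mu_lt R x hq (_ : (b < a <= n)%N); rewrite e ltxx; apply; lia.
    + by rewrite h eqxx in ne.
  - by move=> a _ u; apply: eigD.
  - by move=> u v huv; rewrite !Dsum !Eop_n /f huv.
have hE : Eop k' f x = Eop k' f y.
  rewrite -!Dsum; apply: eq_big_nat => a ha; apply: hD' => //.
  by rewrite mem_index_iota; lia.
have cE w : Eop k' f w = (Nk k' w)%:R^-1 * (cnt (fun z : word q n => pblock P z) w k' lab)%:R.
  rewrite /Eop; congr (_ * _); rewrite /f -big_mkcondr sumr_const /cnt.
  by apply: (congr1 (fun m : nat => m%:R)); apply: eq_card => z; rewrite -topredE /= !inE andbC.
rewrite !cE (Nk_const x y hk) in hE.
move/mulfI: hE; rewrite invr_eq0 Nk_neq0 => /(_ isT) /eqP.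
by rewrite eqr_nat => /eqP.
Qed.

Local Close Scope ring_scope.
Unset Implicit Arguments.
Theorem theorem15 (R : realFieldType) (q n : nat) (hq : (2 <= q)%N) (hn : (1 <= n)%N)
  (P : {set {set word q n}}) :
  partition P [set: word q n] -> lumpable R P ->
  exists K : {group {perm word q n}},
    K \subset tree_aut q n /\
    [set orbit 'P K x | x in [set: word q n]] = P.
Proof.
move=> hP hL.
have hC := lumpC hq hn hP hL.
case/and3P: (hP) => /eqP hcov htriv h0.
pose Kset := [set g in tree_aut q n | [forall z, pblock P (g z) == pblock P z]].
have gK : group_set Kset.
  apply/group_setP; split.
    rewrite inE; apply/andP; split.
      by apply/tree_autP => u v m _; rewrite !perm1.
    by apply/forallP => z; rewrite perm1.
  move=> g h; rewrite inE => /andP[/tree_autP g1 /forallP g2]; rewrite inE => /andP[/tree_autP h1 /forallP h2]; rewrite inE.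
  apply/andP; split.
    by apply/tree_autP => u v m hm; rewrite !permM -h1 // -g1.
  by apply/forallP => z; rewrite permM (eqP (h2 _)) (eqP (g2 _)).
have orbE x : orbit 'P (Group gK) x = pblock P x.
  apply/setP => y; apply/idP/idP.
    case/orbitP => g hg <-; move: hg; rewrite inE => /andP[_ /forallP/(_ x)/eqP e].
    by rewrite /= -e mem_pblock hcov inE.
  move=> hy; have e : pblock P x = pblock P y by rewrite (same_pblock htriv hy).
  have [g [g1 g2 g3]] := tree_iso hC hC hC hC e.
  apply/orbitP; exists g => //; rewrite inE g1 /=.
  by apply/forallP => z; rewrite g2.
exists (Group gK); split.
  by apply/subsetP => g; rewrite inE => /andP[].
apply/setP => B; apply/imsetP/idP.
  by case=> x _ ->; rewrite orbE; apply: pblock_mem; rewrite hcov inE.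
move=> hB; have : B != set0 by apply: contraNneq h0 => <-.
case/set0Pn => x hx; exists x; rewrite ?inE //.
by rewrite orbE (def_pblock htriv hB hx).
Qed.
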